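(* For any connected graph $G$ with vertex set $\{u_1,\dots,u_n\}$, $n\ge2$, and any family $\mathcal{H}=\{H_1,\dots,H_n\}$ of graphs, $\dim_l(G\circ\mathcal{H})\ge\dim_l(G)$. Moreover, if every $H_i$ is an edgeless graph, then $\dim_l(G\circ\mathcal{H})=\dim_l(G)$.
   Context: All graphs are finite and simple with at least one vertex. For a connected graph $G$, $\dim_l(G)$ is the minimum size of $S\subseteq V(G)$ such that for every two adjacent vertices $x,y$ there is $s\in S$ with $d_G(s,x)\ne d_G(s,y)$ ($d_G$ the shortest-path distance). Lexicographic product $G\circ\mathcal{H}$: vertex set $\bigcup_i\{u_i\}\times V(H_i)$, $(u_i,v)\sim(u_j,w)$ iff $u_iu_j\in E(G)$, or $i=j$ and $vw\in E(H_i)$. *)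

(* Defs.v *)
From mathcomp Require Import all_boot.
Set Implicit Arguments. Unset Strict Implicit. Unset Printing Implicit Defensive.

Section Graphs.
Variable T : finType.
Implicit Types (e : rel T).

Definition simple_graph e := symmetric e /\ irreflexive e.

Definition connected_graph e := forall x y : T, connect e x y.

Fixpoint ball e (k : nat) (x : T) : {set T} :=
  if k is k'.+1 then
    ball e k' x :|: [set y | [exists z in ball e k' x, e z y]]
  else [set x].

(* shortest-path distance: least k with y within k steps of x
   (correct whenever y is reachable from x; #|T| otherwise) *)
Definition dist e (x y : T) : nat :=
  find (fun k => y \in ball e k x) (iota 0 #|T|).

Definition local_resolving e (S : {set T}) : bool :=
  [forall x : T, forall y : T,
     e x y ==> [exists s in S, dist e s x != dist e s y]].

Definition ldim e : nat :=
  \big[minn/#|T|]_(S : {set T} | local_resolving e S) #|S|.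
End Graphs.

(* lexicographic product G o H, vertices (u_i, v) with v in V(H_i) *)
Definition lexprod (T : finType) (V : T -> finType) (e : rel T)
  (eH : forall i, rel (V i)) : rel {i : T & V i} :=
  fun x y => e (tag x) (tag y) ||
             ((tag x == tag y) && eH (tag x) (tagged x) (tagged_as x y)).

(* Main.v *)
Require Import Defs.
From mathcomp Require Import all_boot.
Set Implicit Arguments. Unset Strict Implicit. Unset Printing Implicit Defensive.

Section G.
Variable T : finType.
Variable e : rel T.

Lemma ball_center k x : x \in ball e k x.
Proof. elim: k => [|k IH] /=; first by rewrite inE. by rewrite inE IH. Qed.

Lemma path_ball p x : path e x p -> last x p \in ball e (size p) x.
Proof.
elim/last_ind: p => [|q z IH] /=; first by rewrite inE.
rewrite rcons_path last_rcons size_rcons => /andP [pq ez] /=.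
rewrite !inE; apply/orP; right; apply/existsP; exists (last x q).
by rewrite IH.
Qed.

Lemma connect_ball x y : connect e x y -> exists2 k, k < #|T| & y \in ball e k x.
Proof.
move/connectP => [p pth ->]; case: (shortenP pth) => p' pth' uq _.
exists (size p'); last exact: path_ball.
have := max_card (mem (x :: p')). by rewrite (card_uniqP uq).
Qed.

Lemma find_iota (P : pred nat) m n k : k < m -> P k -> m <= n ->
  find P (iota 0 n) = find P (iota 0 m).
Proof.
move=> km Pk mn; rewrite -(subnKC mn) iotaD find_cat.
have -> : has P (iota 0 m) by apply/hasP; exists k; rewrite // mem_iota.
by [].
Qed.

Lemma dist_xx x : dist e x x = 0.
Proof.
have hT : 0 < #|T| by apply/card_gt0P; exists x.
rewrite /dist; case: #|T| hT => // n _ /=. by rewrite inE eqxx.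
Qed.

Lemma dist_eq0 x y : dist e x y = 0 -> x = y.
Proof.
have hT : 0 < #|T| by apply/card_gt0P; exists x.
rewrite /dist; case: #|T| hT => // n _ /=. rewrite inE.
by case: ifP => // /eqP ->.
Qed.

Lemma dist_adj x y : 1 < #|T| -> irreflexive e -> e x y -> dist e x y = 1.
Proof.
move=> hT ie exy.
have hxy : (y == x) = false by apply/negbTE; apply/eqP => yx; rewrite yx ie in exy.
rewrite /dist; case: #|T| hT => [|[|n]] // _ /=.
rewrite !inE hxy /=.
have -> : [exists z in [set x], e z y] by apply/existsP; exists x; rewrite inE eqxx exy.
by [].
Qed.

Lemma dist1_adj x y : 1 < #|T| -> dist e x y = 1 -> e x y.
Proof.
move=> hT; rewrite /dist; case: #|T| hT => [|[|n]] // _ /=.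
rewrite !inE; case: ifP => // hxy; case: ifP => //=; rewrite hxy /= => /existsP [z /andP [zx ezy]] _.
by rewrite inE in zx; move/eqP: zx ezy => ->.
Qed.

Lemma ldim_le S : local_resolving e S -> ldim e <= #|S|.
Proof.
move=> hS; rewrite /ldim.
have: S \in index_enum {set T} by rewrite mem_index_enum.
elim: (index_enum _) => //= a r IH; rewrite inE big_cons.
case/orP => [/eqP <-|/IH h]; first by rewrite hS geq_minl.
by case: ifP => _; rewrite ?geq_min ?h ?orbT.
Qed.

Lemma ldim_ge m : m <= #|T| -> (forall S, local_resolving e S -> m <= #|S|) -> m <= ldim e.
Proof.
move=> h1 h2; rewrite /ldim; apply: (big_ind (fun x => m <= x)) => //.
by move=> a b ha hb; rewrite leq_min ha hb.
Qed.

Lemma ldim_leT : ldim e <= #|T|.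
Proof.
rewrite /ldim; apply: (big_ind (fun x => x <= #|T|)) => //.
by move=> a b ha hb; rewrite geq_min ha.
move=> S _; exact: max_card.
Qed.
End G.

Section L.
Variable T : finType.
Variable e : rel T.
Variable V : T -> finType.
Variable eH : forall i, rel (V i).
Variable c : forall i, V i.
Local Notation L := (lexprod e eH).

Lemma ball_proj k x y : y \in ball L k x -> tag y \in ball e k (tag x).
Proof.
elim: k y => [|k IH] y /=; first by rewrite !inE => /eqP ->.
rewrite !inE => /orP [/IH -> //| /existsP [z /andP [zb Lzy]]].
apply/orP; case/orP: Lzy => [ez | /andP [/eqP <- _]]; last by left; apply: IH.
by right; apply/existsP; exists (tag z); rewrite IH.
Qed.

Lemma ball_lift k x y : tag y != tag x -> tag y \in ball e k (tag x) -> y \in ball L k x.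
Proof.
elim: k y => [|k IH] y /= hne.
  by rewrite inE => /eqP h; rewrite h eqxx in hne.
rewrite !inE => /orP [h | /existsP [z /andP [zb ez]]]; first by rewrite IH.
apply/orP; right; apply/existsP; case: (eqVneq z (tag x)) => [zx | zx].
  by exists x; rewrite ball_center /lexprod; rewrite zx in ez; rewrite ez.
by exists (Tagged V (c z)); rewrite IH //= /lexprod /= ez.
Qed.

Lemma card_sigT : #|T| <= #|{: {i : T & V i}}|.
Proof. by apply: (leq_card (fun i => Tagged V (c i))) => i j /(congr1 tag). Qed.

Lemma dist_lex x y : connected_graph e -> tag x != tag y ->
  dist L x y = dist e (tag x) (tag y).
Proof.
move=> conn hne; rewrite /dist.
rewrite (eq_find (a2 := fun k => tag y \in ball e k (tag x))); last first.
  move=> k /=; apply/idP/idP; [exact: ball_proj | apply: ball_lift; by rewrite eq_sym].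
have [k kT hk] := connect_ball (conn (tag x) (tag y)).
exact: find_iota kT hk card_sigT.
Qed.
End L.

Section R.
Variable T : finType.
Variable e : rel T.
Variable V : T -> finType.
Variable eH : forall i, rel (V i).
Variable c : forall i, V i.
Local Notation L := (lexprod e eH).
Hypothesis se : symmetric e.
Hypothesis ie : irreflexive e.
Hypothesis conn : connected_graph e.
Hypothesis hT : 1 < #|T|.

Lemma proj_res S : local_resolving L S -> local_resolving e (tag @: S).
Proof.
move/forallP => H; apply/forallP => i; apply/forallP => j; apply/implyP => eij.
have := forallP (H (Tagged V (c i))) (Tagged V (c j)).
rewrite /lexprod /= eij /= => /existsP [s /andP [sS hs]].
apply/existsP; exists (tag s); rewrite imset_f //=.
case: (eqVneq (tag s) i) => [->|si].
  rewrite dist_xx eq_sym; apply/eqP => /dist_eq0 h; by rewrite h ie in eij.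
case: (eqVneq (tag s) j) => [->|sj].
  rewrite dist_xx; apply/eqP => /dist_eq0 h; by rewrite h ie in eij.
by rewrite !(@dist_lex _ _ _ _ c) //= in hs.
Qed.

Hypothesis hH : forall i (u v : V i), ~~ eH u v.

Lemma same_case x y : e (tag x) (tag y) ->
  dist L (Tagged V (c (tag x))) x != dist L (Tagged V (c (tag x))) y.
Proof.
move=> exy.
have ne : tag x != tag y by apply/eqP => h; rewrite h ie in exy.
rewrite [X in _ != X](@dist_lex _ _ _ _ c) //= (@dist_adj T e (tag x) (tag y)) //.
apply/eqP => /dist1_adj.
have h1 : 1 < #|{: {i : T & V i}}| by exact: (leq_trans hT (card_sigT c)).
move/(_ h1). rewrite /lexprod /= ie /=. by move/andP=> [_]; apply/negP; apply: hH.
Qed.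

Lemma lift_res S : local_resolving e S ->
  local_resolving L ((fun k => Tagged V (c k)) @: S).
Proof.
move/forallP => H; apply/forallP => x; apply/forallP => y; apply/implyP.
rewrite /lexprod (negbTE (hH _ _)) andbF orbF => exy.
have := forallP (H (tag x)) (tag y); rewrite exy => /existsP [k /andP [kS hk]].
apply/existsP; exists (Tagged V (c k)); apply/andP; split; first by apply/imsetP; exists k.
case: (eqVneq k (tag x)) => [->|kx]; first exact: same_case.
case: (eqVneq k (tag y)) => [->|ky]; first by rewrite eq_sym; apply: same_case; rewrite se.
by rewrite !(@dist_lex _ _ _ _ c) //= eq_sym.
Qed.
End R.

Theorem mainTheorem7 (T : finType) (e : rel T) (V : T -> finType)
  (eH : forall i, rel (V i)) :
  simple_graph e -> connected_graph e -> 1 < #|T| ->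
  (forall i, 0 < #|V i|) -> (forall i, simple_graph (eH i)) ->
  ldim e <= ldim (lexprod e eH) /\
  ((forall i (u v : V i), ~~ eH i u v) -> ldim (lexprod e eH) = ldim e).
Proof.
move=> [se ie] conn hT hV _.
pose c := fun i => xchoose (elimT card_gt0P (hV i)).
have P1 : ldim e <= ldim (lexprod e eH).
  apply: ldim_ge; first exact: leq_trans (ldim_leT e) (card_sigT c).
  move=> S hS; exact: leq_trans (ldim_le (proj_res c ie conn hS)) (leq_imset_card _ _).
split => // hH; apply/eqP; rewrite eqn_leq P1 andbT.
have hres : forall S, local_resolving e S -> ldim (lexprod e eH) <= #|S|.
  move=> S hS.
  exact: leq_trans (ldim_le (lift_res c se ie conn hT hH hS)) (leq_imset_card _ _).
apply: ldim_ge => //; rewrite -cardsT; apply: hres.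
apply/forallP => x; apply/forallP => y; apply/implyP => exy.
apply/existsP; exists x; rewrite inE /= dist_xx eq_sym.
by apply/eqP => /dist_eq0 h; rewrite h ie in exy.
Qed.
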